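(* Let $C$ be a finite dimensional CAT(0) cube complex with no facing triples, let $g$ be a hyperbolic cubical automorphism of $C$ and let $\mathfrak h$ be a hyperplane of $C$. Then either $g$ skewers $\mathfrak h$ or there is $n\in\mathbb N$, $n\ge1$, with $g^n\mathfrak h=\mathfrak h$.
   Context: A cubical automorphism is hyperbolic if it fixes no point of $C$. For a hyperplane $\mathfrak h$ with halfspaces $\mathfrak h^+,\mathfrak h^-$, $g$ skewers $\mathfrak h$ if there is $n\ge1$ with $g^n\mathfrak h^+\subsetneq\mathfrak h^+$ or $g^n\mathfrak h^-\subsetneq\mathfrak h^-$. A facing triple is a triple of pairwise disjoint hyperplanes none of which separates the other two. *)

(* Defs.v *)
(* A CAT(0) cube complex C is encoded by its 1-skeleton, a
   median graph (Chepoi / Roller / Gerasimov: 1-skeleta of CAT(0) cube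
   complexes are exactly median graphs, and C is recovered by filling in cubes).
   Cubical automorphisms of C = graph automorphisms of the 1-skeleton.
   Halfspaces = convex vertex sets with convex nonempty complement; a
   hyperplane is the unordered pair {H, complement H} of a halfspace. *)
From Stdlib Require Import Reals List Arith.
Open Scope R_scope.

Definition vset (V : Type) := V -> Prop.

Inductive walk {V : Type} (adj : V -> V -> Prop) : V -> V -> nat -> Prop :=
| walk0 x : walk adj x x 0
| walkS x y z n : adj x y -> walk adj y z n -> walk adj x z (S n).

Definition dist_is {V : Type} (adj : V -> V -> Prop) (x y : V) (n : nat) : Prop :=
  walk adj x y n /\ forall m, walk adj x y m -> (n <= m)%nat.

Definition between {V : Type} (adj : V -> V -> Prop) (x z y : V) : Prop :=
  exists a b, dist_is adj x z a /\ dist_is adj z y b /\ dist_is adj x y (a + b).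

Definition is_median_graph {V : Type} (adj : V -> V -> Prop) : Prop :=
  (forall x y, adj x y -> adj y x) /\
  (forall x, ~ adj x x) /\
  (forall x y, exists n, walk adj x y n) /\
  (forall x y z, exists m,
      (between adj x m y /\ between adj y m z /\ between adj x m z) /\
      forall m', between adj x m' y -> between adj y m' z ->
                 between adj x m' z -> m' = m).

Definition compl {V : Type} (A : vset V) : vset V := fun v => ~ A v.
Definition subset {V : Type} (A B : vset V) : Prop := forall v, A v -> B v.
Definition set_eq {V : Type} (A B : vset V) : Prop := forall v, A v <-> B v.
Definition strict_subset {V : Type} (A B : vset V) : Prop :=
  subset A B /\ ~ set_eq A B.
Definition img {V : Type} (g : V -> V) (A : vset V) : vset V :=
  fun w => exists v, A v /\ w = g v.

Definition convex {V : Type} (adj : V -> V -> Prop) (A : vset V) : Prop :=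
  forall x y z, A x -> A y -> between adj x z y -> A z.

Definition halfspace {V : Type} (adj : V -> V -> Prop) (H : vset V) : Prop :=
  convex adj H /\ convex adj (compl H) /\ (exists v, H v) /\ (exists v, ~ H v).

Definition same_hyp {V : Type} (H K : vset V) : Prop :=
  set_eq K H \/ set_eq K (compl H).

Definition crossing {V : Type} (H K : vset V) : Prop :=
  (exists v, H v /\ K v) /\ (exists v, H v /\ ~ K v) /\
  (exists v, ~ H v /\ K v) /\ (exists v, ~ H v /\ ~ K v).

Definition disjoint_hyp {V : Type} (H K : vset V) : Prop :=
  ~ same_hyp H K /\ ~ crossing H K.

(* the hyperplane of K lies in the halfspace A *)
Definition on_side {V : Type} (K A : vset V) : Prop :=
  subset K A \/ subset (compl K) A.

Definition separates {V : Type} (H K L : vset V) : Prop :=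
  (on_side K H /\ on_side L (compl H)) \/ (on_side K (compl H) /\ on_side L H).

Definition facing_triple {V : Type} (adj : V -> V -> Prop) (H1 H2 H3 : vset V) : Prop :=
  halfspace adj H1 /\ halfspace adj H2 /\ halfspace adj H3 /\
  disjoint_hyp H1 H2 /\ disjoint_hyp H1 H3 /\ disjoint_hyp H2 H3 /\
  ~ separates H1 H2 H3 /\ ~ separates H2 H1 H3 /\ ~ separates H3 H1 H2.

Definition no_facing_triples {V : Type} (adj : V -> V -> Prop) : Prop :=
  forall H1 H2 H3, ~ facing_triple adj H1 H2 H3.

Definition finite_dim {V : Type} (adj : V -> V -> Prop) : Prop :=
  exists D : nat, forall l : list (vset V),
    Forall (halfspace adj) l -> ForallOrdPairs crossing l -> (length l <= D)%nat.

Definition is_automorphism {V : Type} (adj : V -> V -> Prop) (g : V -> V) : Prop :=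
  (exists g', (forall v, g' (g v) = v) /\ (forall v, g (g' v) = v)) /\
  (forall x y, adj x y <-> adj (g x) (g y)).

(* A point x of C, in cubical coordinates: c H in [0,1] measures how far x
   lies inside the halfspace H.  The hyperplanes with fractional coordinate
   are finitely many and pairwise crossing, and they are exactly the
   hyperplanes crossing a (nonempty) vertex set Q lying in every halfspace of
   coordinate 1, i.e. x lies in the interior of the cube spanned by Q. *)
Definition is_point {V : Type} (adj : V -> V -> Prop) (c : vset V -> R) : Prop :=
  (forall A B, set_eq A B -> c A = c B) /\
  (forall H, halfspace adj H -> 0 <= c H <= 1 /\ c H + c (compl H) = 1) /\
  (exists Q : vset V, (exists v, Q v) /\
     forall H, halfspace adj H ->
       (c H = 1 -> subset Q H) /\
       (0 < c H < 1 -> (exists v, Q v /\ H v) /\ (exists v, Q v /\ ~ H v))) /\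
  (exists S : list (vset V), Forall (halfspace adj) S /\ ForallOrdPairs crossing S /\
     forall H, halfspace adj H -> 0 < c H < 1 -> Exists (same_hyp H) S).

(* g fixes the point c: (g.c)(gH) = c(H) equals c(gH) for every halfspace *)
Definition fixes_point {V : Type} (adj : V -> V -> Prop) (g : V -> V) (c : vset V -> R) : Prop :=
  forall H, halfspace adj H -> c (img g H) = c H.

Definition hyperbolic {V : Type} (adj : V -> V -> Prop) (g : V -> V) : Prop :=
  ~ exists c, is_point adj c /\ fixes_point adj g c.

Definition skewers {V : Type} (g : V -> V) (H : vset V) : Prop :=
  exists n : nat, (1 <= n)%nat /\
    (strict_subset (img (Nat.iter n g) H) H \/
     strict_subset (img (Nat.iter n g) (compl H)) (compl H)).

(* Main.v *)
Require Import Defs.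
From Stdlib Require Import Reals List Arith Lia Classical.
Open Scope nat_scope.
Lemma partition_ex {T : Type} (P : T -> Prop) (l : list T) : NoDup l ->
  exists l1 l2, (forall x, In x l1 -> In x l /\ P x) /\ (forall x, In x l2 -> In x l /\ ~ P x)
   /\ NoDup l1 /\ NoDup l2 /\ length l1 + length l2 = length l.
Proof.
  induction l as [|a l IH]; intros Hnd.
  - exists nil, nil. simpl; repeat split; try tauto; constructor.
  - inversion Hnd as [|? ? Hna Hnd']; subst.
    destruct (IH Hnd') as (l1 & l2 & H1 & H2 & N1 & N2 & Hl).
    destruct (classic (P a)) as [Pa|Pa].
    + exists (a :: l1), l2. refine (conj _ (conj _ (conj _ (conj _ _)))).
      * intros x [Hx|Hx]; [subst; simpl; auto|]. destruct (H1 x Hx); simpl; auto.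
      * intros x Hx; destruct (H2 x Hx); simpl; auto.
      * constructor; auto. intro Ha; apply Hna; apply (H1 a Ha).
      * exact N2.
      * simpl; lia.
    + exists l1, (a :: l2). refine (conj _ (conj _ (conj _ (conj _ _)))).
      * intros x Hx; destruct (H1 x Hx); simpl; auto.
      * intros x [Hx|Hx]; [subst; simpl; auto|]. destruct (H2 x Hx); simpl; auto.
      * exact N1.
      * constructor; auto. intro Ha; apply Hna; apply (H2 a Ha).
      * simpl; lia.
Qed.

Lemma fop_of_all {T : Type} (c : T -> T -> Prop) (l : list T) : NoDup l ->
  (forall x y, In x l -> In y l -> x <> y -> c x y) -> ForallOrdPairs c l.
Proof.
  induction l as [|a l IH]; intros Hnd H; constructor.
  - inversion Hnd; subst. apply Forall_forall. intros y Hy.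
    apply H; simpl; auto. intro; subst; auto.
  - inversion Hnd; subst. apply IH; auto. intros; apply H; simpl; auto.
Qed.

Fixpoint rr (k : nat) : nat := match k with 0 => 0 | S k => S (S k + rr k) end.

Lemma ramsey {T : Type} (c d : T -> T -> Prop) : forall k l, NoDup l -> rr k <= length l ->
  (forall x y, In x l -> In y l -> x <> y -> c x y \/ d x y) ->
  (exists l', (forall x, In x l' -> In x l) /\ k <= length l' /\ ForallOrdPairs c l') \/
  (exists x y z, x <> y /\ x <> z /\ y <> z /\ d x y /\ d x z /\ d y z).
Proof.
  induction k as [|k IH]; intros l Hnd Hlen Hcd.
  - left. exists nil. refine (conj _ (conj _ _)); [intros x []|simpl; lia|constructor].
  - destruct l as [|x t]; [simpl in Hlen; lia|].
    inversion Hnd as [|? ? Hxt Hndt]; subst.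
    destruct (partition_ex (d x) t Hndt) as (Dn & Cn & HD & HC & ND & NC & Hl).
    simpl in Hlen.
    destruct (le_lt_dec (S k) (length Dn)) as [Hbig|Hsmall].
    + destruct (classic (exists y z, In y Dn /\ In z Dn /\ y <> z /\ d y z)) as [Tr|NTr].
      * right. destruct Tr as (y & z & Hy & Hz & Hyz & Dyz).
        destruct (HD y Hy) as [Ty Dy]. destruct (HD z Hz) as [Tz Dz].
        exists x, y, z. repeat split; auto; intro; subst; auto.
      * left. exists Dn. refine (conj _ (conj _ _)); auto.
        -- intros y Hy; right; apply (HD y Hy).
        -- apply fop_of_all; auto. intros y z Hy Hz Hyz.
           destruct (Hcd y z) as [?|Dyz]; auto; try (right; apply (HD _ Hy)); try (right; apply (HD _ Hz)).
           exfalso; apply NTr; exists y, z; auto.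
    + assert (Hc : rr k <= length Cn) by lia.
      assert (Hcd' : forall x0 y, In x0 Cn -> In y Cn -> x0 <> y -> c x0 y \/ d x0 y).
      { intros a b Ha Hb Hab. apply Hcd; auto; right; [apply (HC a Ha)|apply (HC b Hb)]. }
      destruct (IH Cn NC Hc Hcd') as [(l' & Hi & Hk & Hf)|Tr].
      * left. exists (x :: l'). refine (conj _ (conj _ _)).
        -- intros y [Hy|Hy]; [left; auto|right; apply (HC y (Hi y Hy))].
        -- simpl; lia.
        -- constructor; auto. apply Forall_forall. intros y Hy.
           destruct (HC y (Hi y Hy)) as [Ty NDy].
           destruct (Hcd x y) as [?|?]; [left; auto|right; auto| |auto|tauto].
           intro; subst; auto.
      * right; exact Tr.
Qed.

Section G.
Context {V : Type} (adj : V -> V -> Prop).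
Definition pres (h : V -> V) := forall x y, adj x y -> adj (h x) (h y).

Lemma walk_map h : pres h -> forall x y n, walk adj x y n -> walk adj (h x) (h y) n.
Proof. intros Hp x y n W; induction W; [constructor|econstructor; eauto]. Qed.

Lemma dist_map h h' : pres h -> pres h' -> (forall x, h' (h x) = x) ->
  forall x y n, dist_is adj x y n -> dist_is adj (h x) (h y) n.
Proof.
  intros Hp Hp' Hk x y n [W M]. split; [apply walk_map; auto|].
  intros m Wm. apply M. rewrite <- (Hk x), <- (Hk y). apply walk_map; auto.
Qed.

Lemma between_map h h' : pres h -> pres h' -> (forall x, h' (h x) = x) ->
  forall x z y, Defs.between adj x z y -> Defs.between adj (h x) (h z) (h y).
Proof.
  intros Hp Hp' Hk x z y (a & b & D1 & D2 & D3). exists a, b.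
  repeat split; try (apply (dist_map h h'); auto); apply D1 || apply D2 || apply D3.
Qed.

Lemma halfspace_img h h' : pres h -> pres h' -> (forall x, h' (h x) = x) -> (forall x, h (h' x) = x) ->
  forall A, halfspace adj A -> halfspace adj (img h A).
Proof.
  intros Hp Hp' Hk Hk' A (C1 & C2 & [v Hv] & [w Hw]).
  split; [|split; [|split]].
  - intros a b z [a0 [Ha ->]] [b0 [Hb ->]] Hbt. exists (h' z). split; [|auto].
    apply (C1 a0 b0 (h' z)); auto.
    rewrite <- (Hk a0), <- (Hk b0). apply (between_map h' h); auto.
  - intros a b z Ha Hb Hbt [z0 [Hz0 ->]]. apply (C2 (h' a) (h' b) z0).
    + intro Q. apply Ha. exists (h' a). split; auto.
    + intro Q. apply Hb. exists (h' b). split; auto.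
    + rewrite <- (Hk z0). apply (between_map h' h); auto.
    + exact Hz0.
  - exists (h v). exists v; auto.
  - exists (h w). intros [u [Hu E]]. apply Hw. rewrite <- (Hk w), E, Hk. exact Hu.
Qed.
End G.
Lemma iter_inv {V : Type} (g g' : V -> V) : (forall v, g' (g v) = v) ->
  forall n v, Nat.iter n g' (Nat.iter n g v) = v.
Proof. intros h n; induction n as [|n IH]; intros v; [reflexivity|].
  rewrite Nat.iter_succ_r. simpl. rewrite h. apply IH. Qed.

Lemma iter_pres {V : Type} (adj : V -> V -> Prop) g : pres adj g -> forall n, pres adj (Nat.iter n g).
Proof. intros h n; induction n; intros x y H; simpl; auto. Qed.

Lemma nosep {V : Type} (A B C : vset V) :
  ~ subset A B -> ~ subset B C -> ~ subset C A -> ~ subset B A -> ~ subset C B -> ~ subset A C ->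
  ~ separates B A C.
Proof.
  intros n1 n2 n3 n4 n5 n6 [[S1 S2]|[S1 S2]].
  - destruct S1 as [S1|S1]; [tauto|]. destruct S2 as [S2|S2].
    + apply n3. intros v Cv. apply NNPP. intro nA. apply (S2 v Cv). apply S1. exact nA.
    + apply n2. intros v Bv. apply NNPP. intro nC. apply (S2 v nC). exact Bv.
  - destruct S2 as [S2|S2]; [tauto|]. destruct S1 as [S1|S1].
    + apply n6. intros v Av. apply NNPP. intro nC. apply (S1 v Av). apply S2. exact nC.
    + apply n4. intros v Bv. apply NNPP. intro nA. apply (S1 v nA). exact Bv.
Qed.

Theorem mainTheorem6 (V : Type) (adj : V -> V -> Prop) (g : V -> V) (H : vset V) :
  is_median_graph adj -> finite_dim adj -> no_facing_triples adj ->
  is_automorphism adj g -> hyperbolic adj g -> halfspace adj H ->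
  skewers g H \/
  exists n : nat, (1 <= n)%nat /\ same_hyp H (img (Nat.iter n g) H).
Proof.
  intros _ [D HD] NF [[g' [Hg'g Hgg']] Hadj] _ HH.
  apply NNPP. intro NOT.
  assert (NS : ~ skewers g H) by tauto.
  assert (NE : ~ exists n : nat, (1 <= n)%nat /\ same_hyp H (img (Nat.iter n g) H)) by tauto.
  clear NOT.
  set (A := fun n => img (Nat.iter n g) H).
  assert (Pg : pres adj g) by (intros x y; apply Hadj).
  assert (Pg' : pres adj g') by (intros x y h; apply Hadj; rewrite !Hgg'; exact h).
  assert (K1 : forall n v, Nat.iter n g' (Nat.iter n g v) = v) by (apply iter_inv; auto).
  assert (K2 : forall n v, Nat.iter n g (Nat.iter n g' v) = v) by (apply iter_inv; auto).
  assert (Inj : forall n u v, Nat.iter n g u = Nat.iter n g v -> u = v).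
  { intros n u v E. rewrite <- (K1 n u), <- (K1 n v), E. reflexivity. }
  assert (HA : forall n, halfspace adj (A n)).
  { intro n. apply (halfspace_img adj (Nat.iter n g) (Nat.iter n g')); auto; apply iter_pres; auto. }
  assert (memA : forall i v, A i (Nat.iter i g v) <-> H v).
  { intros i v; split; [intros [u [Hu E]]; apply Inj in E; subst; auto|intro; exists v; auto]. }
  assert (memAk : forall i k v, A (i + k) (Nat.iter i g v) <-> A k v).
  { intros i k v; split.
    - intros [u [Hu E]]. rewrite Nat.iter_add in E. apply Inj in E. subst. exists u; auto.
    - intros [u [Hu E]]. subst. exists u. rewrite Nat.iter_add; auto. }
  assert (Ka : forall k, 1 <= k -> ~ subset H (A k)).
  { intros k Hk S. destruct (classic (set_eq (A k) H)) as [E|NE'].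
    - apply NE. exists k. split; auto. left; exact E.
    - apply NS. exists k. split; auto. right. split.
      + intros w [u [Hu ->]] Hw. destruct (S _ Hw) as [u' [Hu' E]]. apply Inj in E. subst. auto.
      + intro E. apply NE'. intro v. split; [|apply S].
        intro Av. apply NNPP. intro nH.
        assert (Q : img (Nat.iter k g) (compl H) v) by (apply E; exact nH).
        destruct Q as [u [Hu E1]]. destruct Av as [u' [Hu' E2]]. rewrite E1 in E2.
        apply Inj in E2. subst. auto. }
  assert (Kb : forall k, 1 <= k -> ~ subset (A k) H).
  { intros k Hk S. destruct (classic (set_eq (A k) H)) as [E|NE'].
    - apply NE. exists k. split; auto. left; exact E.
    - apply NS. exists k. split; auto. left. split; auto. }
  assert (Kc : forall k, 1 <= k -> ~ set_eq (A k) (compl H)).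
  { intros k Hk E. apply NE. exists k. split; auto. right; exact E. }
  assert (Pair : forall i j, i <> j -> ~ subset (A i) (A j) /\ ~ set_eq (A j) (compl (A i))).
  { intros i j Hij. destruct (lt_eq_lt_dec i j) as [[Hlt|Heq]|Hgt]; [|tauto|].
    - replace j with (i + (j - i)) by lia. set (k := j - i). assert (1 <= k) by lia.
      split.
      + intro S. apply (Ka k); auto. intros v Hv. apply (memAk i k v). apply S. apply memA; exact Hv.
      + intro E. apply (Kc k); auto. intro v. rewrite <- (memAk i k v), (E _).
        unfold compl. rewrite (memA i v). tauto.
    - replace i with (j + (i - j)) by lia. set (k := i - j). assert (1 <= k) by lia.
      split.
      + intro S. apply (Kb k); auto. intros v Hv. apply (memA j v). apply S. apply memAk; exact Hv.
      + intro E. apply (Kc k); auto. intro v. pose proof (E (Nat.iter j g v)) as E'.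
        rewrite (memA j v) in E'. unfold compl in *. rewrite (memAk j k v) in E'.
        split; [tauto|]. intros nH. apply NNPP. tauto. }
  destruct (ramsey (fun i j => crossing (A i) (A j)) (fun i j => disjoint_hyp (A i) (A j))
             (S D) (seq 0 (rr (S D))) (seq_NoDup _ _)) as [(l' & _ & Hlen & Hf)|(x & y & z & xy & xz & yz & Dxy & Dxz & Dyz)].
  - rewrite length_seq; auto.
  - intros i j _ _ Hij. destruct (classic (crossing (A i) (A j))) as [C|NC]; [left; auto|right].
    split; auto. destruct (Pair i j Hij) as [P1 P2]. intros [E|E]; [apply P1; intros v; apply E|apply P2; exact E].
  - assert (length (map A l') <= D).
    { apply HD.
      - apply Forall_forall. intros X HX. apply in_map_iff in HX. destruct HX as [i [<- _]]. auto.
      - clear -Hf. induction Hf; simpl; constructor; auto. apply Forall_map; auto. }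
    rewrite length_map in H0. lia.
  - apply (NF (A x) (A y) (A z)).
    destruct (Pair x y xy) as [s1 _]. destruct (Pair y x (not_eq_sym xy)) as [s2 _].
    destruct (Pair x z xz) as [s3 _]. destruct (Pair z x (not_eq_sym xz)) as [s4 _].
    destruct (Pair y z yz) as [s5 _]. destruct (Pair z y (not_eq_sym yz)) as [s6 _].
    refine (conj (HA x) (conj (HA y) (conj (HA z) (conj Dxy (conj Dxz (conj Dyz (conj _ (conj _ _)))))))); apply nosep; auto.
Qed.
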